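(* Let $\Psi$ be a root system in a real inner product space, with base $\{\gamma_1,\dots,\gamma_m\}$ and positive roots $\Psi^+$, and let $\mathfrak{s}^+=\{H\in\operatorname{span}\Psi:(H,\gamma_i)>0\text{ for all } i\}$. Let $\Psi_1=\operatorname{span}_{\mathbb{Z}}\{\gamma_2,\dots,\gamma_m\}\cap\Psi$ with positive roots $\Psi_1^+=\Psi_1\cap\Psi^+$, and let $R_1=\{H\in\mathfrak{s}^+:\|H\|\ge1,\ (\gamma_1,H)\ge(\gamma_j,H)\text{ for all } j\}$. Then there exists $C>0$ such that for all $\alpha\in\Psi^+\setminus\Psi_1^+$ and all $H\in R_1$, $$(H,\alpha)\ge C\|H\|.$$
   Context: In the paper $\Psi$ arises as a simple subroot system of an irreducible root system $\Phi$ with base $\Delta$, i.e. $\Psi=\operatorname{span}_{\mathbb{Z}}\{\gamma_1,\dots,\gamma_m\}\cap\Phi$ for some subset $\{\gamma_1,\dots,\gamma_m\}\subseteq\Delta$. *)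

(* Defs.v *)
From HB Require Import structures.
From mathcomp Require Import all_boot all_order all_algebra.
From mathcomp Require Import reals.
Set Implicit Arguments. Unset Strict Implicit. Unset Printing Implicit Defensive.
Import Order.TTheory GRing.Theory Num.Theory.
Local Open Scope ring_scope.

(* The real inner product space is modelled as R^n = 'rV[R]_n with the
   standard inner product. *)
Definition dot (R : realType) (n : nat) (u v : 'rV[R]_n) : R := (u *m v^T) 0 0.
Definition vnorm (R : realType) (n : nat) (u : 'rV[R]_n) : R := Num.sqrt (dot u u).

(* A (finite, crystallographic, not necessarily reduced) root system,
   given as a finite list of vectors. *)
Definition is_root_system (R : realType) (n : nat) (Psi : seq 'rV[R]_n) : Prop :=
  [/\ 0 \notin Psi,
      (forall a b, a \in Psi -> b \in Psi ->
         b - ((2 * dot b a) / dot a a) *: a \in Psi) &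
      (forall a b, a \in Psi -> b \in Psi ->
         (2 * dot b a) / dot a a \in Num.int)].

Definition zcomb (R : realType) (n m : nat) (gamma : 'I_m -> 'rV[R]_n)
  (k : 'I_m -> int) : 'rV[R]_n := \sum_(i < m) (k i)%:~R *: gamma i.

Definition is_base (R : realType) (n m : nat) (Psi : seq 'rV[R]_n)
  (gamma : 'I_m -> 'rV[R]_n) : Prop :=
  [/\ (forall i, gamma i \in Psi),
      (forall c : 'I_m -> R, \sum_(i < m) c i *: gamma i = 0 -> forall i, c i = 0) &
      (forall a, a \in Psi -> exists k : 'I_m -> int,
          a = zcomb gamma k /\ ((forall i, 0 <= k i) \/ (forall i, k i <= 0)))].

Definition pos_root (R : realType) (n m : nat) (Psi : seq 'rV[R]_n)
  (gamma : 'I_m -> 'rV[R]_n) (a : 'rV[R]_n) : Prop :=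
  a \in Psi /\ exists k : 'I_m -> int, a = zcomb gamma k /\ forall i, 0 <= k i.

(* Psi_1 = span_Z {gamma_2, ..., gamma_m} ∩ Psi   (gamma_1 = gamma ord0) *)
Definition in_Psi1 (R : realType) (n m : nat) (Psi : seq 'rV[R]_n)
  (gamma : 'I_m.+1 -> 'rV[R]_n) (a : 'rV[R]_n) : Prop :=
  a \in Psi /\ exists k : 'I_m.+1 -> int, a = zcomb gamma k /\ k ord0 = 0.

Definition in_span (R : realType) (n : nat) (Psi : seq 'rV[R]_n) (H : 'rV[R]_n) : Prop :=
  exists c : 'I_(size Psi) -> R, H = \sum_(i < size Psi) c i *: Psi`_i.

Definition in_splus (R : realType) (n m : nat) (Psi : seq 'rV[R]_n)
  (gamma : 'I_m -> 'rV[R]_n) (H : 'rV[R]_n) : Prop :=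
  in_span Psi H /\ forall i, 0 < dot H (gamma i).

Definition in_R1 (R : realType) (n m : nat) (Psi : seq 'rV[R]_n)
  (gamma : 'I_m.+1 -> 'rV[R]_n) (H : 'rV[R]_n) : Prop :=
  [/\ in_splus Psi gamma H, 1 <= vnorm H &
      forall j, dot (gamma j) H <= dot (gamma ord0) H].

(* Main.v *)
Require Import Defs.
From HB Require Import structures.
From mathcomp Require Import all_boot all_order all_algebra.
From mathcomp Require Import reals.
From mathcomp Require Import ring lra.
Import Order.TTheory GRing.Theory Num.Theory.
Local Open Scope ring_scope.
Set Implicit Arguments. Unset Strict Implicit.

Lemma dotE (R : realType) n (u v : 'rV[R]_n) : dot u v = \sum_j u 0 j * v 0 j.
Proof. rewrite /dot !mxE; apply: eq_bigr => j _; rewrite mxE. done. Qed.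

Lemma dotC (R : realType) n (u v : 'rV[R]_n) : dot u v = dot v u.
Proof. rewrite !dotE; apply: eq_bigr => j _; exact: mulrC. Qed.

Lemma dot_sumr (R : realType) n k (u : 'rV[R]_n) (a : 'I_k -> R) (w : 'I_k -> 'rV[R]_n) :
  dot u (\sum_i a i *: w i) = \sum_i a i * dot u (w i).
Proof.
rewrite dotE; under eq_bigr do rewrite summxE big_distrr.
rewrite exchange_big; apply: eq_bigr => i _; rewrite dotE big_distrr.
apply: eq_bigr => j _; rewrite !mxE; exact: mulrCA.
Qed.

Lemma dot_eq0 (R : realType) n (v : 'rV[R]_n) : dot v v = 0 -> v = 0.
Proof.
rewrite dotE => h; apply/rowP => j; rewrite mxE.
have /psumr_eq0P := h.
move=> /(_ (fun i _ => sqr_ge0 (v 0 i)) j isT) /eqP; rewrite mulf_eq0 orbb => /eqP //.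
Qed.

Lemma span_gamma (R : realType) n k (Psi : seq 'rV[R]_n) (gamma : 'I_k -> 'rV[R]_n) H :
  (forall a, a \in Psi -> exists c : 'I_k -> R, a = \sum_i c i *: gamma i) ->
  in_span Psi H -> exists c : 'I_k -> R, H = \sum_i c i *: gamma i.
Proof.
move=> hP [c ->].
apply: (big_ind (fun v => exists c : 'I_k -> R, v = \sum_i c i *: gamma i)).
- exists (fun _ => 0); rewrite big1 // => i _; exact: scale0r.
- move=> x y [c1 ->] [c2 ->]; exists (fun i => c1 i + c2 i).
  rewrite -big_split; apply: eq_bigr => i _; by rewrite scalerDl.
- move=> i _; have [c' ->] := hP Psi`_i (mem_nth 0 (ltn_ord i)).
  exists (fun j => c i * c' j); rewrite scaler_sumr; apply: eq_bigr => j _.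
  exact: scalerA.
Qed.

Definition gmx (R : realType) n k (gamma : 'I_k -> 'rV[R]_n) : 'M[R]_(k, n) :=
  \matrix_(i, j) gamma i 0 j.

Lemma gram_unit (R : realType) n k (gamma : 'I_k -> 'rV[R]_n) :
  (forall c : 'I_k -> R, \sum_(i < k) c i *: gamma i = 0 -> forall i, c i = 0) ->
  (gmx gamma *m (gmx gamma)^T) \in unitmx.
Proof.
move=> hind; set Gm := gmx gamma; rewrite -row_free_unit; apply: inj_row_free => v hv.
have hw : dot (v *m Gm) (v *m Gm) = 0.
  by rewrite /dot trmx_mul mulmxA -(mulmxA v) hv mul0mx mxE.
have w0 := dot_eq0 hw.
have hrow : forall i, row i Gm = gamma i by move=> i; apply/rowP => j; rewrite !mxE.
rewrite mulmx_sum_row in w0.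
have h := hind (fun i => v 0 i); rewrite -(eq_bigr _ (fun i _ => congr1 _ (hrow i))) in h.
apply/rowP => i; rewrite mxE; exact: h w0 i.
Qed.

Theorem lemma2 (R : realType) (n m : nat) (Psi : seq 'rV[R]_n)
  (gamma : 'I_m.+1 -> 'rV[R]_n) :
  is_root_system Psi -> is_base Psi gamma ->
  exists C : R, 0 < C /\
    forall alpha : 'rV[R]_n,
      pos_root Psi gamma alpha -> ~ in_Psi1 Psi gamma alpha ->
      forall H : 'rV[R]_n, in_R1 Psi gamma H ->
        C * vnorm H <= dot H alpha.
Proof.
move=> _ [hin hind hdec].
pose Gm := gmx gamma. pose G := Gm *m Gm^T.
have hU : G \in unitmx := gram_unit hind.
pose Gi := invmx G.
pose M := \sum_i \sum_j `|Gi i j|.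
have M0 : 0 <= M by apply: sumr_ge0 => i _; apply: sumr_ge0 => j _.
pose K := m.+1%:R * M + 1.
have K0 : 0 < K.
  have := mulr_ge0 (ler0n R m.+1) M0; rewrite /K; lra.
have sK0 : 0 < Num.sqrt K by rewrite sqrtr_gt0.
exists (Num.sqrt K)^-1; split; first by rewrite invr_gt0.
move=> alpha [halpha [k [hak hk]]] hn H [[hsp hpos] _ hmax].
have hkn : k ord0 != 0.
  by apply/eqP => e; apply: hn; split => //; exists k.
pose d0 := dot H (gamma ord0).
have hd : forall i, 0 < dot H (gamma i) /\ dot H (gamma i) <= d0.
  move=> i; split; first exact: hpos.
  rewrite /d0 !(dotC H); exact: hmax.
have step2 : d0 <= dot H alpha.
  rewrite hak /zcomb dot_sumr (bigD1 ord0) //=.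
  have r : 0 <= \sum_(i < m.+1 | i != ord0) (k i)%:~R * dot H (gamma i).
    apply: sumr_ge0 => i _; apply: mulr_ge0; first by rewrite ler0z.
    exact: ltW (hd i).1.
  have k1 : 1 <= (k ord0)%:~R :> R by rewrite ler1z -gtz0_ge1 lt0r hkn hk.
  have := ler_peMl (ltW (hd ord0).1) k1; rewrite -/d0; lra.
apply: le_trans step2.
have hP : forall a, a \in Psi -> exists c : 'I_m.+1 -> R, a = \sum_i c i *: gamma i.
  move=> a /hdec [kk [-> _]]; by exists (fun i => (kk i)%:~R).
have [c hc] := span_gamma hP hsp.
pose cv : 'rV[R]_m.+1 := \row_i c i.
have hH : H = cv *m Gm.
  rewrite hc mulmx_sum_row; apply: eq_bigr => i _; rewrite mxE; congr (_ *: _).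
  by apply/rowP => j; rewrite !mxE.
pose d := H *m Gm^T.
have hd0 : forall i, d 0 i = dot H (gamma i).
  move=> i; rewrite /d dotE !mxE; apply: eq_bigr => j _; by rewrite !mxE.
have hcv : cv = d *m Gi.
  by rewrite /d /Gi hH -(mulmxA cv Gm) mulmxK.
have hci : forall i, `|c i| <= d0 * M.
  move=> i; have -> : c i = cv 0 i by rewrite mxE.
  rewrite hcv mxE.
  apply: le_trans (ler_norm_sum _ _ _) _.
  apply: (@le_trans _ _ (\sum_j d0 * `|Gi j i|)).
    apply: ler_sum => j _; rewrite normrM hd0 (ger0_norm (ltW (hd j).1)).
    apply: ler_wpM2r => //; exact: (hd j).2.
  rewrite -mulr_sumr; apply: ler_wpM2l; first exact: ltW (hd ord0).1.
  rewrite /M [leRHS]exchange_big /= [leRHS](bigD1 i) //= lerDl.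
  by apply: sumr_ge0 => a _; apply: sumr_ge0.
have hHH : dot H H <= K * d0 ^+ 2.
  rewrite {2}hc dot_sumr.
  apply: (@le_trans _ _ (\sum_(i < m.+1) (d0 * M) * d0)).
    apply: ler_sum => i _; apply: le_trans (ler_norm _) _.
    rewrite normrM (ger0_norm (ltW (hd i).1)).
    apply: ler_pM; [exact: normr_ge0 | exact: ltW (hd i).1 | exact: hci | exact: (hd i).2].
  rewrite sumr_const card_ord -mulr_natl /K.
  have : 0 <= d0 ^+ 2 by exact: sqr_ge0.
  have -> : m.+1%:R * (d0 * M * d0) = m.+1%:R * M * d0 ^+ 2 by ring.
  rewrite mulrDl mul1r; lra.
have hv : vnorm H <= Num.sqrt K * d0.
  rewrite /vnorm; apply: le_trans (ler_wsqrtr hHH) _.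
  rewrite sqrtrM ?(ltW K0) // sqrtr_sqr ger0_norm //; exact: ltW (hd ord0).1.
rewrite -/d0; apply: le_trans (ler_wpM2l _ hv) _; first by rewrite invr_ge0 ltW.
by rewrite mulrA mulVf ?mul1r // gt_eqF.
Qed.
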